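(* Let $r\ge1$, $\mathbb{K}=\mathbb{F}_{2^r}$, and let $\mathcal{L}\subseteq\mathbb{F}_2^{N\times N}$ be a linear subspace. If $A\in\mathcal{L}\otimes_{\mathbb{F}_2}\mathbb{K}$ is nonzero and $\operatorname{rank}_{\mathbb{K}}(A)\le k$, then there exists a nonzero $B\in\mathcal{L}$ with $\operatorname{rank}_{\mathbb{F}_2}(B)\le rk$.
   Context: $\mathcal{L}\otimes_{\mathbb{F}_2}\mathbb{K}$ is identified with the $\mathbb{K}$-linear span of $\mathcal{L}$ inside $\mathbb{K}^{N\times N}$ (equivalently, the set of solutions over $\mathbb{K}$ of the homogeneous $\mathbb{F}_2$-linear equations defining $\mathcal{L}$). *)

(* Defs.v *)
From HB Require Import structures.
From mathcomp Require Import all_boot all_order all_algebra all_field.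
Set Implicit Arguments. Unset Strict Implicit. Unset Printing Implicit Defensive.
Import GRing.Theory.
Local Open Scope ring_scope.

Definition f2K (K : fieldType) (x : 'F_2) : K := (nat_of_ord x)%:R.

(* L (x)_{F_2} K, identified with the K-linear span of L inside K^{N x N}:
   A is a finite K-linear combination of (images of) elements of L. *)
Definition in_tensor (K : fieldType) (N : nat) (L : {vspace 'M['F_2]_N})
    (A : 'M[K]_N) : Prop :=
  exists s : seq ('M['F_2]_N * K),
    all (fun p => p.1 \in L) s /\
    A = \sum_(p <- s) p.2 *: map_mx (@f2K K) p.1.

(* Main.v *)
Require Import Defs.
From HB Require Import structures.
From mathcomp Require Import all_boot all_order all_algebra all_field.
Set Implicit Arguments. Unset Strict Implicit. Unset Printing Implicit Defensive.
Import GRing.Theory.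
Local Open Scope ring_scope.

Section Aux.
Variables (K : finFieldType) (r : nat).
Hypotheses (hr : (1 <= r)%N) (cK : #|K| = (2 ^ r)%N).

Lemma ch2 : (2 \in [pchar K])%N.
Proof. by apply: (card_finPcharP cK). Qed.

Lemma two0 : (2%:R : K) = 0.
Proof. exact: (pcharf0 ch2). Qed.

Lemma f2K_mor : zmod_morphism (@f2K K) /\ monoid_morphism (@f2K K).
Proof.
have h := two0.
have m1 : (1 : K) = -1 by apply/eqP; rewrite -subr_eq0 opprK; apply/eqP; exact: h.
split.
  move=> x y; rewrite /f2K.
  case: x => [[|[|?]] ?] //; case: y => [[|[|?]] ?] //=; rewrite ?subrr ?subr0 ?sub0r //.
split; first by [].
move=> x y; rewrite /f2K.
case: x => [[|[|?]] ?] //; case: y => [[|[|?]] ?] //=; rewrite ?mulr0 ?mul0r ?mulr1 //.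
Qed.

Definition f2Kr : {rmorphism 'F_2 -> K} :=
  HB.pack (@f2K K) (GRing.isZmodMorphism.Build _ _ _ (proj1 f2K_mor))
    (GRing.isMonoidMorphism.Build _ _ _ (proj2 f2K_mor)).

Lemma f2K_01 (e : 'F_2) : f2K K e = 0 \/ f2K K e = 1.
Proof. by rewrite /f2K; case: e => [[|[|?]] ?] //; [left|right]. Qed.

Definition tr (x : K) := \sum_(i < r) x ^+ (2 ^ i).

Lemma expD2 i (x y : K) : (x + y) ^+ (2 ^ i) = x ^+ (2 ^ i) + y ^+ (2 ^ i).
Proof. by apply: exprDn_pchar; rewrite pnatX (pnatE _ (isT : prime 2)) ch2. Qed.

Lemma tr0 : tr 0 = 0.
Proof. by rewrite /tr big1 // => i _; rewrite expr0n expn_eq0. Qed.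

Lemma trD x y : tr (x + y) = tr x + tr y.
Proof. by rewrite /tr -big_split /=; apply: eq_bigr => i _; rewrite expD2. Qed.

Lemma tr_sum (I : Type) (s : seq I) (F : I -> K) :
  tr (\sum_(i <- s) F i) = \sum_(i <- s) tr (F i).
Proof.
elim: s => [|a s IH]; first by rewrite !big_nil tr0.
by rewrite !big_cons trD IH.
Qed.

Lemma tr_sq x : tr x ^+ 2 = tr x.
Proof.
have -> : tr x ^+ 2 = \sum_(i < r) x ^+ (2 ^ i.+1).
  rewrite /tr (big_morph (fun a : K => a ^+ (2 ^ 1)) (fun a b => expD2 1 a b) (expr0n _ _)).
  by apply: eq_bigr => i _; rewrite -exprM expn1 -expnSr.
rewrite /tr; move: cK; case: r hr => // r' _ cK'.
rewrite big_ord_recr big_ord_recl /= -cK' expf_card expn0 expr1 addrC.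
by congr (_ + _); apply: eq_bigr.
Qed.

Lemma tr01 x : tr x = 0 \/ tr x = 1.
Proof.
have : tr x * (tr x - 1) == 0 by rewrite mulrBr mulr1 -expr2 tr_sq subrr.
rewrite mulf_eq0 subr_eq0 => /orP [] /eqP; by [left|right].
Qed.

Lemma tr_nz : exists z, tr z != 0.
Proof.
case: (boolP [exists z, tr z != 0]) => [/existsP //|/existsPn H]; exfalso.
pose P : {poly K} := \sum_(i < r) 'X^(2 ^ i).
have PE z : P.[z] = tr z.
  by rewrite /P horner_sum; apply: eq_bigr => i _; rewrite hornerXn.
have P0 : P != 0.
  apply/eqP => P0; have : P`_1 = 1.
    rewrite /P coef_sum; move: cK H PE P0; case: r hr => // r' _ _ _ _ _.
    rewrite big_ord_recl coefXn /= big1 ?addr0 // => i _.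
    by rewrite coefXn /bump /= add1n expnS; case: (2 ^ i)%N => [|n] //; rewrite mulnS !addSn.
  by rewrite P0 coef0 => /eqP; rewrite eq_sym oner_eq0.
have sz : (size P <= (2 ^ r.-1).+1)%N.
  apply: leq_trans (size_sum _ _ _) _; apply/bigmax_leqP => i _.
  by rewrite size_polyXn ltnS leq_exp2l // -ltnS prednK.
have := max_poly_roots P0 _ (enum_uniq K).
have -> : all (root P) (enum K).
  by apply/allP => z _; rewrite /root PE; move: (H z); rewrite negbK.
move=> /(_ isT); rewrite -cardE cK => /leq_trans /(_ sz).
by case: r hr => // r' _; rewrite /= ltnS leqNgt expnS ltn_Pmull ?expn_gt0.
Qed.

Lemma tr_mulf2K c e : tr (c * f2K K e) = tr c * f2K K e.
Proof. by case: (f2K_01 e) => ->; rewrite ?mulr0 ?mulr1 ?tr0. Qed.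

Lemma rank_frob m n i (M : 'M[K]_(m, n)) :
  \rank (map_mx (fun x => x ^+ (2 ^ i)) M) = \rank M.
Proof.
elim: i => [|i IH].
  by congr (\rank _); apply/matrixP => a b; rewrite mxE expn0 expr1.
rewrite -IH -[in RHS](mxrank_map (pFrobenius_aut ch2)); congr (\rank _).
by apply/matrixP => a b; rewrite !mxE /=; rewrite -[RHS]/((M a b ^+ (2 ^ i)) ^+ 2) -exprM expnSr.
Qed.

End Aux.

Lemma rank_sum (F : fieldType) m n p (M : 'I_p -> 'M[F]_(m, n)) :
  (\rank (\sum_(i < p) M i)%R <= \sum_(i < p) \rank (M i))%N.
Proof.
apply: (big_ind2 (fun (A : 'M_(m, n)) (k : nat) => \rank A <= k)%N) => //.
- by rewrite mxrank0.
- by move=> A1 n1 A2 n2 h1 h2; exact: leq_trans (mxrank_add _ _) (leq_add h1 h2).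
Qed.

Unset Implicit Arguments. Set Strict Implicit.

Theorem lemma3p12 (r : nat) (K : finFieldType) (N k : nat)
    (L : {vspace 'M['F_2]_N}) (A : 'M[K]_N) :
  (1 <= r)%N -> #|K| = (2 ^ r)%N ->
  in_tensor L A -> A != 0 -> (\rank A <= k)%N ->
  exists2 B : 'M['F_2]_N, (B \in L) && (B != 0) & (\rank B <= r * k)%N.
Proof.
move=> hr cK [s [sL eA]] A0 rk.
have [a [b Aab]] : exists a b, A a b != 0.
  case: (boolP [exists a, [exists b, A a b != 0]]) => [/existsP [a /existsP [b h]]|/existsPn H].
    by exists a, b.
  case/negP: A0; apply/eqP/matrixP => a b; rewrite mxE; apply/eqP.
  by move/existsPn: (H a) => /(_ b); rewrite negbK.
have [z z0] := tr_nz hr cK.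
pose y := z / A a b.
pose t (p : 'M['F_2]_N * K) := tr r (y * p.2).
pose g (c : K) : 'F_2 := if c == 0 then 0 else 1.
have gK c : f2K K (g (tr r c)) = tr r c.
  by rewrite /g; case: (tr01 hr cK c) => ->; rewrite ?eqxx ?oner_eq0.
have fS (I : Type) (q : seq I) (F : I -> 'F_2) :
    f2K K (\sum_(p <- q) F p) = \sum_(p <- q) f2K K (F p).
  exact: (rmorph_sum (f2Kr cK)).
have fM (u v : 'F_2) : f2K K (u * v) = f2K K u * f2K K v.
  exact: (rmorphM (f2Kr cK)).
pose B := \sum_(p <- s) g (t p) *: p.1.
pose T := \matrix_(i, j) tr r (y * A i j).
have BT : map_mx (f2Kr cK) B = T.
  apply/matrixP => i j; rewrite [LHS]mxE [RHS]mxE summxE.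
  change (f2K K (\sum_(p <- s) (g (t p) *: p.1) i j) = tr r (y * A i j)).
  rewrite fS eA summxE mulr_sumr (tr_sum cK); apply: eq_bigr => p _.
  by rewrite !mxE fM gK mulrA tr_mulf2K.
exists B.
  apply/andP; split.
    rewrite /B big_seq; apply: rpred_sum => p ps; apply: rpredZ; exact: (allP sL).
  apply/eqP => B0; have := congr1 (fun M : 'M[K]_N => M a b) BT.
  by rewrite B0 !mxE /y divfK // => /esym; apply/eqP.
rewrite -(mxrank_map (f2Kr cK)) BT.
have -> : T = (\sum_(i < r) map_mx (fun x => x ^+ (2 ^ i)) (y *: A))%R.
  by apply/matrixP => i j; rewrite !mxE summxE /tr; apply: eq_bigr => l _; rewrite !mxE.
apply: leq_trans (rank_sum _) _.
apply: (@leq_trans (\sum_(i < r) k)%N).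
  apply: leq_sum => i _; rewrite (rank_frob cK); exact: leq_trans (mxrank_scale _ _) rk.
by rewrite sum_nat_const card_ord.
Qed.
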